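(* Let $J$ be the free algebra on $X$ in the variety of Jordan algebras (with product $\circ$) that additionally satisfy, for all $a,b,c,d$, \[ ((a\circ b)\circ c)\circ d=((a\circ c)\circ b)\circ d=((a\circ b)\circ d)\circ c=(a\circ b)\circ(c\circ d). \] Then the algebra homomorphism $J\to\mathcal{A}s_3\langle X\rangle^{(+)}$ which is the identity on $X$ is injective; that is, $J$ embeds into the free third-type associative algebra $\mathcal{A}s_3\langle X\rangle$ equipped with the anti-commutator $\{a,b\}=ab+ba$.
   Context: An associative algebra is called of the third type if it satisfies $abc+bac-bca-cba=0$ for all $a,b,c$. $\mathcal{A}s_3\langle X\rangle$ is the free such algebra on a countable set $X$ over a field of characteristic $0$, and $\mathcal{A}s_3\langle X\rangle^{(+)}$ denotes the same vector space with product $\{a,b\}=ab+ba$; this is a Jordan algebra (commutative, satisfying $((a\circ a)\circ b)\circ a=(a\circ a)\circ(b\circ a)$), and it is known to satisfy $\{\{\{a,b\},c\},d\}=\{\{\{a,c\},b\},d\}=\{\{\{a,b\},d\},c\}=\{\{a,b\},\{c,d\}\}$, so the homomorphism in the claim exists. *)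

(* Defs.v *)
From HB Require Import structures.
From mathcomp Require Import all_boot all_order all_algebra.
Set Implicit Arguments. Unset Strict Implicit. Unset Printing Implicit Defensive.
Import GRing.Theory.
Local Open Scope ring_scope.

(* Nonassociative (non-unital) polynomial expressions over F in the countable
   set of variables X := nat.  Elements of the free nonassociative algebra
   F{X} are such terms up to the algebra laws. *)
Inductive term (F : Type) : Type :=
| tVar : nat -> term F
| tZero : term F
| tAdd : term F -> term F -> term F
| tScale : F -> term F -> term F
| tMul : term F -> term F -> term F.
Arguments tVar {F} _.
Arguments tZero {F}.

Section Eval.
Variables (F : fieldType) (V : lmodType F) (mul : V -> V -> V) (v : nat -> V).
Fixpoint eval (t : term F) : V :=
  match t with
  | tVar n => v n
  | tZero => 0
  | tAdd a b => eval a + eval b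
  | tScale c a => c *: eval a
  | tMul a b => mul (eval a) (eval b)
  end.
End Eval.

Definition bilinear_prod (F : fieldType) (V : lmodType F) (mul : V -> V -> V) :=
  (forall (c : F) (x y z : V), mul (c *: x + y) z = c *: mul x z + mul y z) /\
  (forall (c : F) (x y z : V), mul x (c *: y + z) = c *: mul x y + mul x z).

Definition special_jordan_variety (F : fieldType) (V : lmodType F)
    (o : V -> V -> V) : Prop :=
  bilinear_prod o /\
  (forall a b, o a b = o b a) /\
  (forall a b, o (o (o a a) b) a = o (o a a) (o b a)) /\
  (forall a b c d,
     o (o (o a b) c) d = o (o (o a c) b) d /\
     o (o (o a c) b) d = o (o (o a b) d) c /\
     o (o (o a b) d) c = o (o a b) (o c d)).

Definition as3_variety (F : fieldType) (V : lmodType F)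
    (m : V -> V -> V) : Prop :=
  bilinear_prod m /\
  (forall a b c, m (m a b) c = m a (m b c)) /\
  (forall a b c,
     m (m a b) c + m (m b a) c - m (m b c) a - m (m c b) a = 0).

(* Equality in the relatively free algebra J on X: p = q in J iff p - q is an
   identity of the variety, i.e. p and q agree under every evaluation in every
   algebra of the variety. *)
Definition J_eq (F : fieldType) (p q : term F) : Prop :=
  forall (V : lmodType F) (o : V -> V -> V) (v : nat -> V),
    special_jordan_variety o -> eval o v p = eval o v q.

Definition As3_eq (F : fieldType) (p q : term F) : Prop :=
  forall (V : lmodType F) (m : V -> V -> V) (v : nat -> V),
    as3_variety m -> eval m v p = eval m v q.

(* The homomorphism J -> As_3<X>^(+) that is the identity on X, on
   representatives: each product a o b is sent to {a,b} = ab + ba. *)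
Fixpoint plus_tr (F : fieldType) (t : term F) : term F :=
  match t with
  | tVar n => tVar n
  | tZero => tZero
  | tAdd a b => tAdd (plus_tr a) (plus_tr b)
  | tScale c a => tScale c (plus_tr a)
  | tMul a b => tAdd (tMul (plus_tr a) (plus_tr b)) (tMul (plus_tr b) (plus_tr a))
  end.

(* Main.v *)
Require Import Defs.
From HB Require Import structures.
From mathcomp Require Import all_boot all_order all_algebra.
From mathcomp Require Import zify.
From mathcomp.algebra_tactics Require Import ring.
From mathcomp Require Import mpoly.
Set Implicit Arguments. Unset Strict Implicit. Unset Printing Implicit Defensive.
Import GRing.Theory.
Local Open Scope ring_scope.

Definition mp (s t : seq nat) : seq nat :=
  if (s == [::]) || (t == [::]) then [::]
  else if (size s < size t)%N then t ++ s else s ++ t.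

Fixpoint NF (F : fieldType) (t : term F) : seq (F * seq nat) :=
  match t with
  | tVar n => [:: (1, [:: n])]
  | tZero => [::]
  | tAdd a b => NF a ++ NF b
  | tScale c a => [seq (c * e.1, e.2) | e <- NF a]
  | tMul a b => [seq (e.1 * f.1, mp e.2 f.2) | e <- NF a, f <- NF b]
  end.

Definition weakJ (F : fieldType) (V : lmodType F) (o : V -> V -> V) :=
  bilinear_prod o /\ (forall a b, o a b = o b a) /\
  (forall a b c d, o (o (o a b) c) d = o (o (o a c) b) d) /\
  (forall a b c d, o (o (o a b) c) d = o (o (o a b) d) c) /\
  (forall a b c d, o (o a b) (o c d) = o (o (o a b) c) d).

Definition swapinv (R : Type) (n : nat) (f : seq nat -> R) :=
  forall l1 l2 a b, (size l1 + size l2 + 2)%N = n ->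
    f (l1 ++ a :: b :: l2) = f (l1 ++ b :: a :: l2).

Lemma move_front (R : Type) t1 : forall n (f : seq nat -> R) x t2,
  swapinv n f -> (size t1 + size t2 + 1)%N = n ->
  f (t1 ++ x :: t2) = f (x :: t1 ++ t2).
Proof.
elim: t1 => [//|y t1 IH] n f x t2 Hf Hn /=.
have Hg : swapinv n.-1 (fun l => f (y :: l)).
  move=> l1 l2 a b Hs; rewrite -!cat_cons; apply: Hf => /=; lia.
rewrite (IH n.-1 (fun l => f (y :: l)) x t2 Hg); last by move: Hn => /=; lia.
by rewrite -(cat0s (y :: x :: _)) Hf //=; move: Hn => /=; rewrite size_cat; lia.
Qed.

Lemma perm_inv (R : Type) s : forall n (f : seq nat -> R) t,
  swapinv n f -> size s = n -> perm_eq s t -> f s = f t.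
Proof.
elim: s => [|x s IH] n f t Hf Hs Hp.
  by move/perm_size: Hp => /= /esym/size0nil ->.
have xt : x \in t by rewrite -(perm_mem Hp) mem_head.
case/splitPr: xt Hp => t1 t2 Hp.
have Hsz := perm_size Hp; rewrite size_cat /= in Hsz.
rewrite (@move_front R t1 n f x t2 Hf); last by move: Hs Hsz => /=; lia.
have Hg : swapinv n.-1 (fun l => f (x :: l)).
  move=> l1 l2 a b Hs'; rewrite -!cat_cons; apply: Hf => /=; move: Hs; lia.
apply: (IH n.-1 (fun l => f (x :: l))) => //; first by move: Hs => /=; lia.
have H2 : perm_eq (t1 ++ x :: t2) (x :: t1 ++ t2) by rewrite -cat1s perm_catCA.
by rewrite -(perm_cons x) (perm_trans Hp H2).
Qed.

Section VSide.
Variables (F : fieldType) (V : lmodType F) (o : V -> V -> V) (v : nat -> V).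
Hypothesis HJ : weakJ o.

Let Hb := HJ.1.
Let Hc := HJ.2.1.
Let I1 := HJ.2.2.1.
Let I2 := HJ.2.2.2.1.
Let I3 := HJ.2.2.2.2.

Lemma o0l y : o 0 y = 0.
Proof.
have := Hb.1 1 0 0 y; rewrite !scale1r addr0.
by move/(congr1 (fun z => z - o 0 y)); rewrite subrr addrK => <-.
Qed.
Lemma o0r y : o y 0 = 0.
Proof. by rewrite Hc o0l. Qed.
Lemma oDl x y z : o (x + y) z = o x z + o y z.
Proof. by rewrite -[x]scale1r Hb.1 !scale1r. Qed.
Lemma oZl c x z : o (c *: x) z = c *: o x z.
Proof. by rewrite -[c *: x]addr0 Hb.1 o0l addr0. Qed.
Lemma oDr x y z : o z (x + y) = o z x + o z y.
Proof. by rewrite Hc oDl !(Hc z). Qed.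
Lemma oZr c x z : o z (c *: x) = c *: o z x.
Proof. by rewrite Hc oZl Hc. Qed.

Lemma o_suml (I : Type) (r : seq I) (cf : I -> F) (X : I -> V) z :
  o (\sum_(i <- r) cf i *: X i) z = \sum_(i <- r) cf i *: o (X i) z.
Proof.
elim: r => [|i r IH]; first by rewrite !big_nil o0l.
by rewrite !big_cons oDl oZl IH.
Qed.
Lemma o_sumr (I : Type) (r : seq I) (cf : I -> F) (X : I -> V) z :
  o z (\sum_(i <- r) cf i *: X i) = \sum_(i <- r) cf i *: o z (X i).
Proof. by rewrite Hc o_suml; apply: eq_bigr => i _; rewrite Hc. Qed.

Definition lf (acc : V) (r : seq nat) := foldl (fun a y => o a (v y)) acc r.
Definition lnp (s : seq nat) : V := if s is x :: r then lf (v x) r else 0.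

Lemma lnp_cat s t : s != [::] -> lnp (s ++ t) = lf (lnp s) t.
Proof. by case: s => [//|x s] _ /=; rewrite /lf foldl_cat. Qed.

Lemma lnp_rcons s y : s != [::] -> lnp (rcons s y) = o (lnp s) (v y).
Proof. by move=> sn; rewrite -cats1 lnp_cat. Qed.

Lemma lnp_ge2 s : (1 < size s)%N -> exists A w, lnp s = o A (v w).
Proof.
case/lastP: s => [//|s w]; rewrite size_rcons ltnS lt0n size_eq0 => sn.
by exists (lnp s), w; rewrite lnp_rcons.
Qed.

Lemma L2 s t : (1 < size s)%N -> t != [::] -> o (lnp s) (lnp t) = lnp (s ++ t).
Proof.
move=> s2; elim/last_ind: t => [//|t y IH] _.
have sn : s != [::] by apply/eqP => sn; rewrite sn in s2.
case: (eqVneq t [::]) => [->|tn].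
  by rewrite /= cats1 lnp_rcons.
have [A [w Hs]] := lnp_ge2 s2.
rewrite lnp_rcons // Hs I3 -Hs IH // -rcons_cat lnp_rcons //.
by rewrite -size_eq0 size_cat addn_eq0 negb_and size_eq0 sn.
Qed.

Lemma lnp_mp s t : o (lnp s) (lnp t) = lnp (mp s t).
Proof.
rewrite /mp; case: (eqVneq s [::]) => [->|sn] /=; first by rewrite o0l.
case: (eqVneq t [::]) => [->|tn] /=; first by rewrite o0r.
case: ltnP => Hst.
  by rewrite Hc L2 //; apply: leq_trans Hst; case: s sn.
case: (ltnP 1 (size s)) => Hs; first exact: L2.
case: s sn Hs Hst => [//|x [|//]] _ _; case: t tn => [//|y [|//]] _ _.
by [].
Qed.

Lemma eval_NF (p : term F) : eval o v p = \sum_(e <- NF p) e.1 *: lnp e.2.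
Proof.
elim: p => [n||a IHa b IHb|c a IHa|a IHa b IHb] /=.
- by rewrite big_seq1 scale1r.
- by rewrite big_nil.
- by rewrite big_cat IHa IHb.
- by rewrite IHa big_map scaler_sumr; apply: eq_bigr => e _; rewrite scalerA.
rewrite big_allpairs_dep /= IHa IHb o_suml; apply: eq_bigr => e _.
rewrite o_sumr scaler_sumr; apply: eq_bigr => f _.
by rewrite lnp_mp scalerA.
Qed.

Lemma swap_lnp n : n != 3%N -> swapinv n lnp.
Proof.
move=> n3 l1 l2 a b Hs.
case: l1 Hs => [|x [|z l1]] Hs.
- by rewrite /lf /= Hc.
- case: l2 Hs => [|y l2] Hs; first by subst n.
  by rewrite /lf /= I1.
- have Hne : x :: z :: l1 != [::] by [].
  rewrite !lnp_cat //.
  have [A [w ->]] : exists A w, lnp (x :: z :: l1) = o A (v w) by apply: lnp_ge2.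
  by rewrite /lf /= I2.
Qed.

End VSide.

Ltac bf :=
  repeat (rewrite ?eqxx /=;
    try (match goal with H : is_true (?x != ?x) |- _ => by rewrite eqxx in H end);
    match goal with |- context [?a == ?b] =>
      case: (eqVneq a b) => [?|?]; subst end);
  rewrite ?eqxx /=; try done.

Definition sim3 (s t : seq nat) : bool :=
  (nth 0%N s 2 == nth 0%N t 2) &&
  (((nth 0%N s 0 == nth 0%N t 0) && (nth 0%N s 1 == nth 0%N t 1)) ||
   ((nth 0%N s 0 == nth 0%N t 1) && (nth 0%N s 1 == nth 0%N t 0))).

Definition cls (s t : seq nat) : bool :=
  if size t == 3%N then (size s == 3%N) && sim3 s t else perm_eq s t.

Lemma sim3_refl s : sim3 s s.
Proof. by rewrite /sim3 !eqxx. Qed.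

Lemma sim3_sym s t : sim3 s t = sim3 t s.
Proof.
rewrite /sim3; move: (nth 0%N s 0) (nth 0%N s 1) (nth 0%N s 2)
  (nth 0%N t 0) (nth 0%N t 1) (nth 0%N t 2) => a b c a' b' c'.
bf.
Qed.

Lemma sim3_trans s t u : sim3 s t -> sim3 t u -> sim3 s u.
Proof.
rewrite /sim3; move: (nth 0%N s 0) (nth 0%N s 1) (nth 0%N s 2)
  (nth 0%N t 0) (nth 0%N t 1) (nth 0%N t 2)
  (nth 0%N u 0) (nth 0%N u 1) (nth 0%N u 2) => a b c a' b' c' a'' b'' c''.
bf.
Qed.

Lemma cls_size s t : cls s t -> size s = size t.
Proof.
rewrite /cls; case: eqP => [-> /andP [/eqP -> _] //|_]; exact: perm_size.
Qed.

Lemma cls_refl t : cls t t.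
Proof. by rewrite /cls; case: eqP => _; rewrite ?eqxx ?sim3_refl ?perm_refl. Qed.

Lemma cls_symI s t : cls s t -> cls t s.
Proof.
move=> H; have Hz := cls_size H; move: H; rewrite /cls Hz.
by case: eqP => _; [rewrite sim3_sym | rewrite perm_sym].
Qed.

Lemma cls_sym s t : cls s t = cls t s.
Proof. by apply/idP/idP => /cls_symI. Qed.

Lemma cls_trans s t u : cls s t -> cls t u -> cls s u.
Proof.
move=> H1 H2; have Hz1 := cls_size H1; have Hz2 := cls_size H2.
move: H1 H2; rewrite /cls -Hz2 -Hz1; case: eqP => _.
  by move=> /andP [_ H1] /andP [_ H2]; rewrite (sim3_trans H1 H2) ?andbT.
exact: perm_trans.
Qed.

Section ClassSum.
Variables (F : fieldType) (V : lmodType F).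
Lemma class_sum (L : seq (F * seq nat)) (f : seq nat -> V) :
  f [::] = 0 -> (forall s t, cls s t -> f s = f t) ->
  (forall t, t != [::] -> \sum_(e <- L | cls e.2 t) e.1 = 0) ->
  \sum_(e <- L) e.1 *: f e.2 = 0.
Proof.
move=> f0 Hf.
have [k Hk] := ubnP (size L); elim: k L Hk => [|k IH] [|e0 L] Hk Hc //.
  by rewrite big_nil.
set t0 := e0.2.
rewrite (bigID (fun e => cls e.2 t0)) /=.
have -> : \sum_(e <- e0 :: L | cls e.2 t0) e.1 *: f e.2 =
          (\sum_(e <- e0 :: L | cls e.2 t0) e.1) *: f t0.
  by rewrite scaler_suml; apply: eq_bigr => e He; rewrite (Hf _ _ He).
have -> : (\sum_(e <- e0 :: L | cls e.2 t0) e.1) *: f t0 = 0.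
  case: (eqVneq t0 [::]) => [->|tn]; first by rewrite f0 scaler0.
  by rewrite Hc // scale0r.
rewrite add0r -big_filter; apply: IH.
  rewrite /= cls_refl /= size_filter; apply: leq_ltn_trans (count_size _ _) _.
  by move: Hk => /=.
move=> t tn; rewrite big_filter_cond /=.
case: (boolP (cls t t0)) => Ht.
  rewrite big1 // => e /andP [H1 H2].
  by move: H1; rewrite (cls_trans H2 Ht).
rewrite -[RHS](Hc t tn); apply: eq_bigl => e.
case: (boolP (cls e.2 t)) => H; rewrite ?andbF ?andbT //.
apply/negP => H'; move: Ht; rewrite (cls_trans _ H') //.
by rewrite cls_sym.
Qed.
End ClassSum.

Section Comm.
Variables (F : fieldType) (n : nat).
Local Notation W := {mpoly F[n.+1]}.

Definition cm (a b : W) := a * b.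
Definition cpo (a b : W) := a * b + b * a.
Definition cw (i : nat) : W := 'X_(inord i).
Definition mon (s : seq nat) : 'X_{1..n.+1} := (\sum_(i <- s) U_(inord i))%MM.

Lemma as3_cm : as3_variety cm.
Proof.
rewrite /as3_variety /bilinear_prod /cm; split; [split|split].
- by move=> c x y z; rewrite mulrDl scalerAl.
- by move=> c x y z; rewrite mulrDr scalerAr.
- by move=> a b c; rewrite mulrA.
- by move=> a b c; ring.
Qed.

Lemma weakJ_cpo : weakJ cpo.
Proof.
rewrite /weakJ /bilinear_prod /cpo; split; [split|split; [|split; [|split]]].
- by move=> c x y z; rewrite mulrDl mulrDr scalerDr -!scalerAl -!scalerAr; ring.
- by move=> c x y z; rewrite mulrDl mulrDr scalerDr -!scalerAl -!scalerAr; ring.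
- by move=> a b; rewrite addrC.
- by move=> a b c d; ring.
- by move=> a b c d; ring.
- by move=> a b c d; ring.
Qed.

Lemma lf_cw k m r :
  lf cpo cw (k *: 'X_[m]) r = (k * 2%:R ^+ size r) *: 'X_[(m + mon r)%MM].
Proof.
elim: r k m => [|y r IH] k m /=.
  by rewrite /mon big_nil addm0 expr0 mulr1.
have -> : cpo (k *: 'X_[m]) (cw y) = (k * 2%:R) *: 'X_[(m + U_(inord y))%MM].
  rewrite /cpo /cw -scalerAl -scalerAr mpolyXD mulrC -scalerDr.
  by rewrite -mulr2n -scaler_nat scalerA mulrC.
by rewrite IH /mon big_cons addmA exprS mulrA [_ * 2%:R]mulrC.
Qed.

Lemma lnp_cw s : s != [::] ->
  lnp cpo cw s = (2%:R ^+ (size s).-1) *: 'X_[mon s].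
Proof.
case: s => [//|x s] _ /=.
rewrite /cw -['X_(inord x)]scale1r lf_cw mul1r /mon big_cons.
by [].
Qed.

Lemma mon_coef s j : mon s j = count (fun i => inord i == j) s.
Proof.
elim: s => [|x s IH]; first by rewrite /mon big_nil mnm0E.
by rewrite /mon big_cons mnmDE mnm1E -/(mon s) IH.
Qed.

Lemma mon_eq s t : all (fun i => i <= n)%N s -> all (fun i => i <= n)%N t ->
  (mon s == mon t) = perm_eq s t.
Proof.
move=> Hs Ht; apply/eqP/idP => [H|H]; last exact: perm_big.
have key u x : all (fun i => i <= n)%N u -> (x <= n)%N ->
    count (fun i => inord i == (inord x : 'I_n.+1)) u = count_mem x u.
  move=> Hu Hx; apply: eq_in_count => i Hi /=.
  have Hi' : (i <= n)%N by move/allP: Hu => /(_ i Hi).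
  apply/eqP/eqP => [E|->] //.
  by move/(congr1 (@nat_of_ord _)): E; rewrite !inordK.
apply/allP => x; rewrite mem_cat => Hx.
have Hxn : (x <= n)%N.
  by case/orP: Hx => Hx; [move/allP: Hs => /(_ x Hx) | move/allP: Ht => /(_ x Hx)].
by rewrite /= -(key s x) // -(key t x) // -!mon_coef H.
Qed.

End Comm.

Section Seven.
Variable (F : fieldType).
Local Notation W7 := 'rV[F]_7.

Definition cf (x : W7) (k : nat) : F := x ord0 (inord k).
Definition pm (f g : nat -> F) (k : nat) : F :=
  match k with
  | 3 => f 0%N * g 1%N - f 1%N * g 0%N
  | 4 => f 1%N * g 2%N
  | 5 => f 0%N * g 2%N
  | 6 => f 3%N * g 2%N + f 0%N * g 4%N - f 1%N * g 5%N
  | _ => 0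
  end.
Definition m7 (x y : W7) : W7 := \row_(i < 7) pm (cf x) (cf y) i.
Definition p7 (x y : W7) : W7 := m7 x y + m7 y x.

Lemma cfm7 x y k : (k < 7)%N -> cf (m7 x y) k = pm (cf x) (cf y) k.
Proof. by move=> Hk; rewrite /cf /m7 mxE inordK. Qed.
Lemma cfD x y k : cf (x + y) k = cf x k + cf y k.
Proof. by rewrite /cf mxE. Qed.
Lemma cfB x y k : cf (x - y) k = cf x k - cf y k.
Proof. by rewrite /cf !mxE. Qed.
Lemma cfN x k : cf (- x) k = - cf x k.
Proof. by rewrite /cf mxE. Qed.
Lemma cfZ c x k : cf (c *: x) k = c * cf x k.
Proof. by rewrite /cf mxE. Qed.
Lemma cf0 k : cf 0 k = 0.
Proof. by rewrite /cf mxE. Qed.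
Lemma W7_eq x y : (forall k, (k < 7)%N -> cf x k = cf y k) -> x = y.
Proof.
move=> H; apply/rowP => i; have := H i (ltn_ord i).
by rewrite /cf inord_val (ord1 ord0).
Qed.

Lemma m7_as3id a b c : m7 (m7 a b) c + m7 (m7 b a) c - m7 (m7 b c) a - m7 (m7 c b) a = 0.
Proof.
apply: W7_eq => k Hk.
rewrite ?(cfD, cfN, cfZ, cf0, cfm7) //.
do 7?[case: k Hk => [|k] Hk]; rewrite //= ?(cfD, cfN, cfZ, cf0, cfm7) //=.
all: try ring.
Qed.

Ltac crunch := apply: W7_eq => ? ?;
  rewrite ?(cfD, cfN, cfZ, cf0, cfm7) //;
  do 7?[match goal with k : nat, Hk : is_true (_ < 7)%N |- _ => case: k Hk => [|?] ? end];
  do 5 rewrite //= ?(cfD, cfN, cfZ, cf0, cfm7) //=; ring.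

Lemma as3_m7 : as3_variety m7.
Proof.
split; [split|split].
- by move=> c x y z; crunch.
- by move=> c x y z; crunch.
- by move=> a b c; crunch.
- exact: m7_as3id.
Qed.

Lemma p7_zero4 a b c d : p7 (p7 (p7 a b) c) d = 0.
Proof. rewrite /p7; crunch. Qed.
Lemma p7_zero22 a b c d : p7 (p7 a b) (p7 c d) = 0.
Proof. rewrite /p7; crunch. Qed.

Lemma weakJ_p7 : weakJ p7.
Proof.
split; [split|split; [|split; [|split]]].
- by move=> c x y z; rewrite /p7; crunch.
- by move=> c x y z; rewrite /p7; crunch.
- by move=> a b; rewrite /p7 addrC.
- by move=> a b c d; rewrite !p7_zero4.
- by move=> a b c d; rewrite !p7_zero4.
- by move=> a b c d; rewrite p7_zero4 p7_zero22.
Qed.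

Definition w7 (G : nat -> nat -> F) (i : nat) : W7 :=
  \row_(k < 7) (if (k < 3)%N then G i k else 0).

Lemma cfw7 G i k : (k < 7)%N -> cf (w7 G i) k = if (k < 3)%N then G i k else 0.
Proof. by move=> Hk; rewrite /cf mxE inordK. Qed.

Definition FG (G : nat -> nat -> F) (s : seq nat) : F :=
  match s with
  | [:: x; y; z] => G z 0%N * (G x 1%N * G y 2%N + G x 2%N * G y 1%N)
                  - G z 1%N * (G x 0%N * G y 2%N + G x 2%N * G y 0%N)
  | _ => 0
  end.

Lemma lf0 (V : lmodType F) (o : V -> V -> V) v r : weakJ o -> lf o v 0 r = 0.
Proof.
move=> HJ; elim: r => [//|y r IH] /=.
by rewrite o0l.
Qed.

Lemma lnp_w7 G s : cf (lnp p7 (w7 G) s) 6 = FG G s.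
Proof.
case: s => [|x [|y [|z [|u r]]]]; rewrite /lnp.
- by rewrite cf0.
- by rewrite cfw7.
- rewrite /p7 !(cfD, cfm7) //= !cfw7 //=; ring.
- rewrite /p7; do 3 rewrite ?(cfD, cfm7) //=; rewrite !cfw7 //=; ring.
- have H acc : lf p7 (w7 G) acc [:: y, z, u & r] =
     lf p7 (w7 G) (p7 (p7 (p7 acc (w7 G y)) (w7 G z)) (w7 G u)) r by [].
  by rewrite H p7_zero4 (lf0 _ _ weakJ_p7) cf0.
Qed.

End Seven.

Section ClsLnp.
Variables (F : fieldType) (V : lmodType F) (o : V -> V -> V) (v : nat -> V).
Hypothesis HJ : weakJ o.
Lemma cls_lnp s t : cls s t -> lnp o v s = lnp o v t.
Proof.
rewrite /cls; case: eqP => Ht.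
- case/andP => /eqP Hs.
  case: s Hs => [|x [|y [|z [|]]]] // _; case: t Ht => [|x' [|y' [|z' [|]]]] // _.
  rewrite /sim3 /=; case/andP => /eqP -> /orP [] /andP [/eqP -> /eqP ->] //.
  by rewrite (HJ.2.1 (v _)).
- move=> Hp; have Hs : size s != 3%N by rewrite (perm_size Hp); apply/eqP.
  exact: (@perm_inv _ s (size s) _ t (swap_lnp v HJ Hs) (erefl _) Hp).
Qed.
End ClsLnp.

Ltac bf2 :=
  repeat (rewrite ?eqxx /=;
    try (match goal with H : is_true (?x != ?x) |- _ => by rewrite eqxx in H end);
    match goal with |- context [?a == ?b] =>
      is_var a; is_var b;
      case: (eqVneq a b) => [?|?]; subst end);
  rewrite ?eqxx /=; try done.

Section PW.
Variable F : fieldType.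

Definition Gb (p q r : nat) (i k : nat) : F :=
  if k == 0%N then (i == p)%:R else if k == 1%N then (i == q)%:R else (i == r)%:R.
Definition Gr (a b : nat) (i k : nat) : F :=
  if k == 1%N then (i == b)%:R else (i == a)%:R.

Lemma not3 s t : size t = 3%N -> size s != 3%N ->
  cls s t = false /\ perm_eq s t = false /\ forall G : nat -> nat -> F, FG G s = 0.
Proof.
move=> Ht Hs; split; first by rewrite /cls Ht eqxx (negbTE Hs).
split; first by apply/negP => /perm_size; rewrite Ht => E; rewrite E in Hs.
by move=> G; case: s Hs => [|u [|v [|w [|? ?]]]].
Qed.

Lemma pw_dist x y z s : x != y -> x != z -> y != z ->
  3%:R * (cls s [:: x; y; z])%:R =
  (perm_eq s [:: x; y; z])%:R + FG (Gb z x y) s + FG (Gb z y x) s :> F.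
Proof.
move=> Hxy Hxz Hyz.
case: (eqVneq (size s) 3%N) => Hs; last first.
  case: (not3 (erefl : size [:: x; y; z] = 3%N) Hs) => H1 [H2 H3].
  by rewrite H1 H2 ?H3 /=; ring.
case: s Hs => [|u [|v [|w [|]]]] // _.
rewrite /cls /sim3 /FG /Gb /perm_eq /=.
bf2.
all: ring.

Qed.


Lemma pw_rep1 a b s : a != b ->
  3%:R * (cls s [:: a; a; b])%:R = (perm_eq s [:: a; a; b])%:R - FG (Gr a b) s :> F.
Proof.
move=> Hab.
case: (eqVneq (size s) 3%N) => Hs; last first.
  case: (not3 (erefl : size [:: a; a; b] = 3%N) Hs) => H1 [_ H3].
  case: (not3 (erefl : size [:: a; a; b] = 3%N) Hs) => _ [H2 _].
  by rewrite H1 H2 ?H3 /=; ring.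
case: s Hs => [|u [|v [|w [|]]]] // _.
rewrite /cls /sim3 /FG /Gr /perm_eq /=.
bf2.
all: ring.
Qed.

Lemma pw_rep2 a b s : a != b ->
  3%:R * (cls s [:: a; b; a])%:R = 2%:R * (perm_eq s [:: a; a; b])%:R + FG (Gr a b) s :> F.
Proof.
move=> Hab.
case: (eqVneq (size s) 3%N) => Hs; last first.
  case: (not3 (erefl : size [:: a; b; a] = 3%N) Hs) => H1 [_ H3].
  case: (not3 (erefl : size [:: a; a; b] = 3%N) Hs) => _ [H2 _].
  by rewrite H1 H2 ?H3 /=; ring.
case: s Hs => [|u [|v [|w [|]]]] // _.
rewrite /cls /sim3 /FG /Gr /perm_eq /=.
bf2.
all: ring.
Qed.

Lemma pw_rep3 a b s : a != b ->
  3%:R * (cls s [:: b; a; a])%:R = 2%:R * (perm_eq s [:: a; a; b])%:R + FG (Gr a b) s :> F.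
Proof.
move=> Hab.
case: (eqVneq (size s) 3%N) => Hs; last first.
  case: (not3 (erefl : size [:: b; a; a] = 3%N) Hs) => H1 [_ H3].
  case: (not3 (erefl : size [:: a; a; b] = 3%N) Hs) => _ [H2 _].
  by rewrite H1 H2 ?H3 /=; ring.
case: s Hs => [|u [|v [|w [|]]]] // _.
rewrite /cls /sim3 /FG /Gr /perm_eq /=.
bf2.
all: ring.
Qed.

Lemma pw_all (a b : nat) s : 
  (cls s [:: a; a; a])%:R = (perm_eq s [:: a; a; a])%:R :> F.
Proof.

case: (eqVneq (size s) 3%N) => Hs; last first.
  case: (not3 (erefl : size [:: a; a; a] = 3%N) Hs) => H1 [_ H3].
  case: (not3 (erefl : size [:: a; a; a] = 3%N) Hs) => _ [H2 _].
  by rewrite H1 H2 ?H3 /=; ring.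
case: s Hs => [|u [|v [|w [|]]]] // _.
rewrite /cls /sim3 /FG /Gr /perm_eq /=.
bf2.
all: ring.
Qed.
End PW.

Section Final.
Variable F : fieldType.
Hypothesis charF0 : [pchar F]%R =i pred0.

Definition Sm (L : seq (F * seq nat)) (phi : seq nat -> F) :=
  \sum_(e <- L) e.1 * phi e.2.

Lemma plus_eval (V : lmodType F) (m o : V -> V -> V) w p :
  (forall a b, o a b = m a b + m b a) ->
  eval m w (plus_tr p) = eval o w p.
Proof.
move=> Ho; elim: p => [n||a IHa b IHb|c a IHa|a IHa b IHb] //=.
- by rewrite IHa IHb.
- by rewrite IHa.
- by rewrite IHa IHb Ho.
Qed.

Lemma model_eq p q (V : lmodType F) (m o : V -> V -> V) w :
  As3_eq (plus_tr p) (plus_tr q) -> as3_variety m ->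
  (forall a b, o a b = m a b + m b a) -> weakJ o ->
  \sum_(e <- NF p) e.1 *: lnp o w e.2 = \sum_(e <- NF q) e.1 *: lnp o w e.2.
Proof.
move=> H Hm Ho HJ; rewrite -!(eval_NF w HJ) -!(plus_eval w _ Ho).
exact: H.
Qed.

Lemma cf_sum (L : seq (F * seq nat)) (X : seq nat -> 'rV[F]_7) k :
  cf (\sum_(e <- L) e.1 *: X e.2) k = \sum_(e <- L) e.1 * cf (X e.2) k.
Proof.
elim: L => [|e L IH]; first by rewrite !big_nil cf0.
by rewrite !big_cons cfD cfZ IH.
Qed.

Lemma FG_detect p q G : As3_eq (plus_tr p) (plus_tr q) ->
  Sm (NF p) (FG G) = Sm (NF q) (FG G).
Proof.
move=> H.
have := model_eq (w7 G) H (@as3_m7 F) (fun a b => erefl) (@weakJ_p7 F).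
move/(congr1 (fun x => cf x 6)); rewrite !cf_sum /Sm.
by under eq_bigr do rewrite lnp_w7; under [RHS]eq_bigr do rewrite lnp_w7.
Qed.

Lemma two_neq0 k : (2%:R ^+ k : F) != 0.
Proof. by rewrite expf_neq0 // ((pcharf0P _).1 charF0). Qed.
Lemma three_neq0 : (3%:R : F) != 0.
Proof. by rewrite ((pcharf0P _).1 charF0). Qed.

Lemma mcoeff_sumZ n (L : seq (F * seq nat)) (X : seq nat -> {mpoly F[n]}) mm :
  mcoeff mm (\sum_(e <- L) e.1 *: X e.2) = \sum_(e <- L) e.1 * mcoeff mm (X e.2).
Proof.
elim: L => [|e L IH]; first by rewrite !big_nil mcoeff0.
by rewrite !big_cons mcoeffD mcoeffZ IH.
Qed.

Lemma perm_detect p q t : As3_eq (plus_tr p) (plus_tr q) -> t != [::] ->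
  Sm (NF p) (fun s => (perm_eq s t)%:R) = Sm (NF q) (fun s => (perm_eq s t)%:R).
Proof.
move=> H tn.
set N := (\max_(i <- flatten (map snd (NF p ++ NF q)) ++ t) i)%N.
have bnd s : s \in map snd (NF p ++ NF q) ++ [:: t] -> all (fun i => i <= N)%N s.
  move=> Hs; apply/allP => i Hi; rewrite /N; apply: (@leq_bigmax_seq _ _ xpredT (fun j => j) i) => //.
  rewrite -[t]cats0 -[_ ++ (t ++ [::])]/(flatten (map snd (NF p ++ NF q)) ++ flatten [:: t]).
  by rewrite -flatten_cat; apply/flattenP; exists s.
have := model_eq (cw F N) H (@as3_cm F N) (fun a b => erefl) (@weakJ_cpo F N).
move/(congr1 (mcoeff (mon N t))); rewrite !mcoeff_sumZ.
have key L : {subset map snd L <= map snd (NF p ++ NF q)} ->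
  \sum_(e <- L) e.1 * mcoeff (mon N t) (lnp (cpo (n:=N)) (cw F N) e.2) =
  2%:R ^+ (size t).-1 * Sm L (fun s => (perm_eq s t)%:R).
  move=> HL; rewrite /Sm mulr_sumr big_seq_cond [RHS]big_seq_cond.
  apply: eq_bigr => e /andP [He _].
  have He2 : e.2 \in map snd (NF p ++ NF q) by apply: HL; apply: map_f.
  case: (eqVneq e.2 [::]) => [E|en].
    rewrite E /= mcoeff0.
    have -> : perm_eq [::] t = false by apply/negP => /perm_size /esym/size0nil/eqP; rewrite (negbTE tn).
    by rewrite !mulr0.
  rewrite lnp_cw // mcoeffZ mcoeffX mon_eq; first last.
  - by apply: bnd; rewrite mem_cat mem_head orbT.
  - by apply: bnd; rewrite mem_cat He2.
  case: (boolP (perm_eq e.2 t)) => Hp; last by rewrite !mulr0.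
  by rewrite (perm_size Hp) mulrCA.
rewrite !key => [E||]; last 2 first.
- by move=> x Hx; rewrite map_cat mem_cat Hx orbT.
- by move=> x Hx; rewrite map_cat mem_cat Hx.
by apply: (mulfI (two_neq0 (size t).-1)).
Qed.
End Final.

Section Final2.
Variable F : fieldType.
Hypothesis charF0 : [pchar F]%R =i pred0.

Lemma Sm_ext (L : seq (F * seq nat)) f g : f =1 g -> Sm L f = Sm L g.
Proof. by move=> H; apply: eq_bigr => e _; rewrite H. Qed.
Lemma SmD (L : seq (F * seq nat)) f g :
  Sm L (fun s => f s + g s) = Sm L f + Sm L g.
Proof. by rewrite /Sm -big_split; apply: eq_bigr => e _; rewrite mulrDr. Qed.
Lemma SmN (L : seq (F * seq nat)) f :
  Sm L (fun s => - f s) = - Sm L f.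
Proof. by rewrite /Sm -sumrN; apply: eq_bigr => e _; rewrite mulrN. Qed.
Lemma SmZ (L : seq (F * seq nat)) c f :
  Sm L (fun s => c * f s) = c * Sm L f.
Proof. by rewrite /Sm mulr_sumr; apply: eq_bigr => e _; rewrite mulrCA. Qed.

Lemma cls_detect (p q : term F) (t : seq nat) : As3_eq (plus_tr p) (plus_tr q) -> t != [::] ->
  Sm (NF p) (fun s => (cls s t)%:R) = Sm (NF q) (fun s => (cls s t)%:R).
Proof.
move=> H tn.
have P3 := perm_detect charF0 H.
have FGd := FG_detect (F:=F) (p:=p) (q:=q).
have th := three_neq0 charF0.
case: (eqVneq (size t) 3%N) => Ht; last first.
  have E s : (cls s t)%:R = (perm_eq s t)%:R :> F by rewrite /cls (negbTE Ht).
  by rewrite !(Sm_ext _ E); apply: P3.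
case: t tn Ht => [|x [|y [|z [|]]]] // _ _.
apply: (mulfI th); rewrite -!SmZ.
case: (eqVneq x y) => [<-|Hxy].
  case: (eqVneq x z) => [<-|Hxz].
    rewrite !(Sm_ext _ (fun s => congr1 (fun u => 3%:R * u) (pw_all F x x s))).
    by rewrite !SmZ P3.
  rewrite !(Sm_ext _ (fun s => pw_rep1 F s Hxz)) !SmD !SmN P3 // FGd //.
case: (eqVneq z x) => [->|Hzx].
  rewrite !(Sm_ext _ (fun s => pw_rep2 F s Hxy)) !SmD !SmZ P3 // FGd //.
case: (eqVneq z y) => [->|Hzy].
  rewrite eq_sym in Hxy.
  rewrite !(Sm_ext _ (fun s => pw_rep3 F s Hxy)) !SmD !SmZ P3 // FGd //.
rewrite eq_sym in Hzx; rewrite eq_sym in Hzy.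
rewrite !(Sm_ext _ (fun s => pw_dist F s Hxy Hzx Hzy)) !SmD P3 // !FGd //.
Qed.
End Final2.

Local Close Scope ring_scope.

Theorem mainTheorem8 (F : fieldType) (charF0 : [pchar F]%R =i pred0)
  (p q : term F) :
  As3_eq (plus_tr p) (plus_tr q) -> J_eq p q.
Proof.
move=> H V o v HJ.
have Hw : weakJ o.
  case: HJ => [Hb [Hc [_ H4]]].
  split=> //; split=> //; split; [|split].
  - by move=> a b c d; case: (H4 a b c d).
  - by move=> a b c d; case: (H4 a b c d) => -> [].
  - by move=> a b c d; case: (H4 a b c d) => -> [-> ->].
rewrite !(eval_NF v Hw); apply/eqP; rewrite -GRing.subr_eq0; apply/eqP.
set L := NF p ++ [seq (- e.1, e.2) | e <- NF q]%R.
have -> : (\sum_(e <- NF p) e.1 *: lnp o v e.2 - \sum_(e <- NF q) e.1 *: lnp o v e.2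
          = \sum_(e <- L) e.1 *: lnp o v e.2)%R.
  rewrite big_cat big_map /= -sumrN; congr (_ + _)%R.
  by apply: eq_bigr => e _; rewrite scaleNr.
apply: class_sum => //.
- by move=> s t; apply: cls_lnp.
- move=> t tn; rewrite big_cat big_map /=.
  have E (L' : seq (F * seq nat)) :
      (\sum_(e <- L' | cls e.2 t) e.1 = Sm L' (fun s => (cls s t)%:R))%R.
    rewrite /Sm big_mkcond; apply: eq_bigr => e _.
    by case: (cls e.2 t); rewrite ?mulr1 ?mulr0.
  by rewrite sumrN !E (cls_detect charF0 H tn) subrr.
Qed.
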